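(* Let $X$ be a finite set and let $\tau\subseteq\binom{X}{2}$ be non-empty with $L(\tau)=X$. Then $\tau$ is thin (i.e. $|L(\tau')|\ge|\tau'|+1$ for every non-empty $\tau'\subseteq\tau$) if and only if the bipartite graph $G(\tau)$ is a forest.
   Context: $L(\tau)=\bigcup_{s\in\tau}s$. $G(\tau)$ is the bipartite graph with vertex set $\tau\cup L(\tau)$ (the two sides) in which $t\in\tau$ and $x\in L(\tau)$ are adjacent if and only if $x\in t$. *)

(* Defs.v *)
From mathcomp Require Import all_boot.
Set Implicit Arguments. Unset Strict Implicit. Unset Printing Implicit Defensive.

Definition L (X : finType) (tau : {set {set X}}) : {set X} :=
  \bigcup_(s in tau) s.

Definition thin (X : finType) (tau : {set {set X}}) : Prop :=
  forall tau' : {set {set X}}, tau' \subset tau -> tau' != set0 ->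
    #|tau'| + 1 <= #|L tau'|.

(* Vertices of G(tau): left side = members of tau (inl), right side = points of L(tau) (inr). *)
Definition Gvertex (X : finType) := ({set X} + X)%type.

Definition Gvert (X : finType) (tau : {set {set X}}) (v : Gvertex X) : bool :=
  match v with
  | inl t => t \in tau
  | inr x => x \in L tau
  end.

Definition Gadj (X : finType) (tau : {set {set X}}) : rel (Gvertex X) :=
  fun u v =>
    match u, v with
    | inl t, inr x => [&& t \in tau, x \in L tau & x \in t]
    | inr x, inl t => [&& t \in tau, x \in L tau & x \in t]
    | _, _ => false
    end.

Definition has_cycle (X : finType) (tau : {set {set X}}) : Prop :=
  exists c : seq (Gvertex X),
    [/\ 3 <= size c, uniq c, all (Gvert tau) c & cycle (Gadj tau) c].

Definition Gforest (X : finType) (tau : {set {set X}}) : Prop := ~ has_cycle tau.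

(* Main.v *)
Require Import Defs.
From mathcomp Require Import all_boot.
Set Implicit Arguments. Unset Strict Implicit. Unset Printing Implicit Defensive.


Lemma cycle_of_mindeg (V : finType) (e : rel V) (S : {set V}) :
  symmetric e -> irreflexive e ->
  (forall v u, v \in S -> exists w, [&& w \in S, e v w & w != u]) ->
  S != set0 ->
  exists c : seq V, [/\ 3 <= size c, uniq c, all (mem S) c & cycle e c].
Proof.
move=> esym eirr deg /set0Pn [v0 v0S].
suff H : forall n x s, #|V| - size s <= n -> uniq (x :: s) -> all (mem S) (x :: s) ->
  path e x s -> exists c : seq V, [/\ 3 <= size c, uniq c, all (mem S) c & cycle e c].
  by apply: (H #|V| v0 [::]) => //=; rewrite ?subn0 // v0S.
elim=> [|n IH] x s Hn Hu Ha Hp.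
  have := max_card (mem (x :: s)); move/card_uniqP: Hu => -> /=.
  move=> H; move: Hn; rewrite leqn0 subn_eq0 => H2.
  by have := leq_trans H H2; rewrite ltnn.
have xS : x \in S by move: Ha => /= /andP[].
have [w /and3P [wS exw wu]] := deg x (head x s) xS.
case: (boolP (w \in x :: s)) => [wIn|wNin].
  have wx : w != x by apply: contraTneq exw => ->; rewrite eirr.
  move: wIn wu Hu Ha Hp; rewrite inE (negbTE wx) /= => /splitPr [s1 s2].
  case: s1 => [|a s1] wu Hu Ha Hp; first by move: wu; rewrite /= eqxx.
  exists (x :: rcons (a :: s1) w); split.
  - by rewrite /= size_rcons.
  - have : uniq ((x :: rcons (a :: s1) w) ++ s2) by rewrite -cats1 /= -catA.
    by rewrite cat_uniq => /andP[].
  - have : all (mem S) ((x :: rcons (a :: s1) w) ++ s2) by rewrite -cats1 /= -catA.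
    by rewrite all_cat => /andP[].
  - rewrite /cycle rcons_path last_rcons esym exw andbT.
    by move: Hp; rewrite cat_path rcons_path /= => /andP[-> /andP[->]].
apply: (IH w (x :: s)).
- by move: Hn => /=; rewrite subnS; case: (#|V| - size s).
- by rewrite /= wNin.
- by rewrite /= wS.
- by rewrite /= esym exw.
Qed.

Lemma prev_neq_next (T : eqType) (c : seq T) (v : T) :
  uniq c -> 3 <= size c -> v \in c -> prev c v != next c v.
Proof.
move=> Uc Hs vc; case: (rot_to vc) => i s Hr.
have Uq : uniq (v :: s) by rewrite -Hr rot_uniq.
have Sq : 3 <= size (v :: s) by rewrite -Hr size_rot.
rewrite -(next_rot i Uc) -(prev_rot i Uc) Hr.
clear Hr; case: s Uq Sq => [|a [|b s]] // Uq _.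
have va : v != a by move: Uq => /= /andP[]; rewrite inE negb_or => /andP[].
have Hn : next [:: v, a, b & s] v = a by rewrite /= eqxx.
have Hab : next [:: v, a, b & s] a = b by rewrite /= eq_sym (negbTE va) eqxx.
apply/eqP => E.
have := next_prev Uq v; rewrite E Hn Hab => bv.
by move: Uq; rewrite /= bv !inE eqxx /= orbT.
Qed.

Lemma Lsub (X : finType) (tau tau' : {set {set X}}) :
  tau' \subset tau -> L tau' \subset L tau.
Proof.
move=> /subsetP H; apply/subsetP => x /bigcupP [t tI xt].
by apply/bigcupP; exists t => //; apply: H.
Qed.

Lemma thin_forest (X : finType) (tau : {set {set X}}) :
  (forall t, t \in tau -> #|t| = 2) -> thin tau -> Gforest tau.
Proof.
move=> H2 Hthin [c [Hs Uc Ac Cc]].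
pose tau' := [set t | inl t \in c].
pose Xc := [set x | @inr {set X} X x \in c].
have sub : tau' \subset tau.
  by apply/subsetP => t; rewrite inE => /(allP Ac).
have adjn : forall v, v \in c -> Gadj tau v (next c v) by move=> v; apply: next_cycle.
have adjp : forall v, v \in c -> Gadj tau (prev c v) v by move=> v; apply: prev_cycle.
pose f := fun x => if next c (inr x) is inl t then t else set0.
have fE : forall x, inr x \in c -> next c (inr x) = inl (f x).
  move=> x xc; rewrite /f; case E: (next c (inr x)) => [t|y] //.
  by have := adjn _ xc; rewrite E.
have ne : tau' != set0.
  have [v vc] : exists v, v \in c.
    by case: (c) Hs => [|v c'] // _; exists v; rewrite inE eqxx.
  case: v vc => [t|x] vc; apply/set0Pn.
    by exists t; rewrite inE.
  exists (f x); rewrite inE -fE //.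
  by rewrite mem_next.
have LX : L tau' \subset Xc.
  apply/subsetP => y /bigcupP [t]; rewrite inE => tc yt.
  have tT : t \in tau by move: (allP Ac _ tc).
  have := prev_neq_next Uc Hs tc.
  have := mem_next c (inl t); have := mem_prev c (inl t).
  have := adjn _ tc; have := adjp _ tc; rewrite tc.
  case: (next c (inl t)) => [//|a]; case: (prev c (inl t)) => [//|b] /=.
  move=> /and3P [_ _ bt] /and3P [_ _ at_] bc ac ba.
  have ab : a != b by apply: contraNneq ba => ->.
  have Et : [set a; b] == t.
    rewrite eqEcard H2 // cards2 ab andbT.
    by apply/subsetP => z; rewrite !inE => /orP [] /eqP ->.
  move: yt; rewrite -(eqP Et) !inE => /orP [] /eqP ->; by [].
have XT : #|Xc| <= #|tau'|.
  rewrite -(@card_in_imset _ _ f).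
    apply: subset_leq_card; apply/subsetP => z /imsetP [x]; rewrite inE => xc ->.
    by rewrite /tau' inE -(fE x xc) mem_next.
  move=> x y; rewrite !inE => xc yc fxy.
  have := prev_next Uc (inr x); rewrite fE // fxy -fE // prev_next //.
  by case.
have := Hthin _ sub ne.
have := subset_leq_card LX.
move=> h1 h2; have := leq_trans h2 (leq_trans h1 XT).
by rewrite addn1 ltnn.
Qed.

From Stdlib Require Import Classical.

Lemma cyc_exists (X : finType) (tau : {set {set X}}) :
  (forall t, t \in tau -> #|t| = 2) ->
  forall n (tau' : {set {set X}}), #|tau'| <= n -> tau' \subset tau -> tau' != set0 ->
  #|L tau'| <= #|tau'| -> has_cycle tau.
Proof.
move=> H2; elim=> [|n IH] tau' Hn sub ne HL.
  by move: ne; rewrite -card_gt0 => /leq_trans /(_ Hn).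
have tT : forall t, t \in tau' -> t \in tau by move=> t; apply: (subsetP sub).
case: (classic (exists x, x \in L tau' /\ forall t1 t2, t1 \in tau' -> t2 \in tau' ->
                 x \in t1 -> x \in t2 -> t1 = t2)) => [[x [xL leaf]] | noleaf].
  have [e eI xe] := bigcupP xL.
  pose tau'' := tau' :\ e.
  have Ct : #|tau'| = (#|tau''|).+1 by rewrite (cardsD1 e tau') eI.
  have sub2 : L tau'' \subset L tau' :\ x.
    apply/subsetP => y /bigcupP [t]; rewrite !inE => /andP [te tI] yt.
    rewrite (_ : y \in L tau' = true); last by apply/bigcupP; exists t.
    rewrite andbT; apply: contraNneq te => yx; apply/eqP.
    by apply: leaf => //; rewrite -yx.
  have CL : #|L tau'| = (#|L tau' :\ x|).+1 by rewrite (cardsD1 x (L tau')) xL.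
  have ne2 : tau'' != set0.
    apply/negP => /eqP E; move: Ct; rewrite E cards0 => Ct.
    have : #|e| <= #|L tau'| by apply: subset_leq_card; apply: (bigcup_sup _ eI).
    by rewrite H2 ?tT // => /leq_trans /(_ HL); rewrite Ct.
  apply: (IH tau'').
  - by move: Hn; rewrite Ct.
  - by apply: subset_trans sub; apply: subD1set.
  - by [].
  - have := subset_leq_card sub2; move: HL; rewrite CL Ct ltnS.
    by move=> h1 h2; apply: leq_trans h2 h1.
have deg2 : forall x, x \in L tau' -> exists t1 t2, [/\ t1 \in tau', t2 \in tau', t1 != t2,
   x \in t1 & x \in t2].
  move=> x xL; apply: NNPP => Hno; apply: noleaf; exists x; split => // t1 t2 h1 h2 h3 h4.
  apply: NNPP => neq; apply: Hno; exists t1, t2; split => //; exact/eqP.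
pose S := [set v : ({set X} + X)%type |
  match v with inl t => t \in tau' | inr x => x \in L tau' end].
have LS := Lsub sub.
have [||||c [c1 c2 c3 c4]] := @cycle_of_mindeg _ (Gadj tau) S.
- by move=> [?|?] [?|?].
- by case.
- move=> [t|x] u; rewrite inE => vS.
  + have /cards2P [a [b [ab Et]]] : #|t| == 2 by rewrite H2 ?tT.
    have aL : a \in L tau' by apply/bigcupP; exists t => //; rewrite Et !inE eqxx.
    have bL : b \in L tau' by apply/bigcupP; exists t => //; rewrite Et !inE eqxx orbT.
    case: (eqVneq u (inr a)) => [->|ua].
      exists (inr b); rewrite inE bL /= tT //= (subsetP LS _ bL) Et !inE eqxx orbT /=.
      by apply: contra ab => /eqP [->].
    exists (inr a); rewrite inE aL /= tT //= (subsetP LS _ aL) Et !inE eqxx /=.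
    by rewrite eq_sym.
  + have [t1 [t2 [h1 h2 h3 h4 h5]]] := deg2 x vS.
    case: (eqVneq u (inl t1)) => [->|ua].
      exists (inl t2); rewrite inE h2 /= tT //= (subsetP LS _ vS) h5 /=.
      by apply: contra h3 => /eqP [->].
    exists (inl t1); rewrite inE h1 /= tT //= (subsetP LS _ vS) h4 /=.
    by rewrite eq_sym.
- case/set0Pn: ne => t tI; apply/set0Pn; exists (inl t); by rewrite inE.
exists c; split => //.
apply/allP => v vc; have h : v \in S := allP c3 v vc.
move: h; rewrite inE; case: v {vc} => [t|x] h.
  by apply: tT.
by apply: (subsetP LS).
Qed.

Theorem corollary2 (X : finType) (tau : {set {set X}}) :
  (forall t, t \in tau -> #|t| = 2) ->
  tau != set0 ->
  L tau = setT ->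
  thin tau <-> Gforest tau.
Proof.
move=> H2 _ _; split; first exact: thin_forest.
move=> Hf tau' sub ne; rewrite leqNgt addn1 ltnS; apply/negP => HL.
by apply: Hf; apply: (cyc_exists H2 (leqnn _) sub ne).
Qed.
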